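(* For every fixed positive integer $r$ there exist positive constants $c_0$ and $c$, depending only on $r$, such that the following holds. Let $d \geq 1$ and $h \geq 0$ be fixed integers and put $D = \max\{d,h\}$. Then for all positive integers $t$ and $x$ with $x \leq \frac{c_0}{D^r}\, t$, $$R(t,d,h,r;x] \geq \frac{c + o(1)}{D^{r+1}},$$ where $o(1)$ denotes a function of $t$ that tends to $0$ as $t \to \infty$.
   Context: Let $T=(t_{ij})$ be a $t\times n$ binary matrix over $\{0,1\}$. For $j\in[n]=\{1,\dots,n\}$ let $C_j=\{i\in[t]: t_{ij}=1\}$ be the support of the $j$th column. For disjoint sets $A,B\subseteq[n]$ define $Z_T(A,B)=\left|\left(\bigcap_{j\in B}C_j\right)\setminus\left(\bigcup_{j\in A}C_j\right)\right|$ and $Y_T(A,B)=\left|\left(\bigcap_{j\in B}C_j\right)\cap\left(\bigcup_{j\in A}C_j\right)\right|$. For positive integers $d,r,z$, $T$ is $(d,r;z]$-disjunct if $Z_T(A,B)\geq z$ for every pair of disjoint $A,B\subseteq[n]$ with $|A|=d$, $|B|=r$. For a positive integer $r$ and nonnegative integers $h,y$, $T$ is $(h,r;y]$-inclusive if $Y_T(A,B)\leq y$ for every pair of disjoint $A,B\subseteq[n]$ with $|A|=h$, $|B|=r$. For positive integers $d,r,x$ and a nonnegative integer $h$, $T$ is $(d,h,r;x]$-inclusively disjunct if there exist integers $z>0$ and $y\geq 0$ with $z-y\geq x$ such that $T$ is both $(d,r;z]$-disjunct and $(h,r;y]$-inclusive. Let $N(t,d,h,r;x]$ be the maximum $n$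 such that a $t\times n$ $(d,h,r;x]$-inclusively disjunct matrix exists, and $R(t,d,h,r;x] = \frac{\log_2 N(t,d,h,r;x]}{t}$. *)

(* Defs.v *)
From mathcomp Require Import all_boot all_algebra.
From Stdlib Require Import Reals ClassicalEpsilon.

Set Implicit Arguments.
Unset Strict Implicit.
Unset Printing Implicit Defensive.

Definition col_supp (t n : nat) (T : 'M[bool]_(t, n)) (j : 'I_n) : {set 'I_t} :=
  [set i | T i j].

Definition Z_T (t n : nat) (T : 'M[bool]_(t, n)) (A B : {set 'I_n}) : nat :=
  #| (\bigcap_(j in B) col_supp T j) :\: (\bigcup_(j in A) col_supp T j) |.

Definition Y_T (t n : nat) (T : 'M[bool]_(t, n)) (A B : {set 'I_n}) : nat :=
  #| (\bigcap_(j in B) col_supp T j) :&: (\bigcup_(j in A) col_supp T j) |.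

Definition disjunct (t n : nat) (T : 'M[bool]_(t, n)) (d r z : nat) : Prop :=
  forall A B : {set 'I_n}, [disjoint A & B] -> #|A| = d -> #|B| = r ->
    z <= Z_T T A B.

Definition inclusive (t n : nat) (T : 'M[bool]_(t, n)) (h r y : nat) : Prop :=
  forall A B : {set 'I_n}, [disjoint A & B] -> #|A| = h -> #|B| = r ->
    Y_T T A B <= y.

Definition incl_disjunct (t n : nat) (T : 'M[bool]_(t, n)) (d h r x : nat) : Prop :=
  exists z y : nat, 0 < z /\ x + y <= z /\ disjunct T d r z /\ inclusive T h r y.

Definition admissible (t d h r x n : nat) : Prop :=
  exists T : 'M[bool]_(t, n), incl_disjunct T d h r x.

Definition is_N (t d h r x N : nat) : Prop :=
  admissible t d h r x N /\ forall n, admissible t d h r x n -> n <= N.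

(* N(t,d,h,r;x] : the (unique) maximum, chosen classically
   (it exists: for n >= d+r columns must be distinct, so n <= max(2^t, d+r-1)). *)
Definition N_max (t d h r x : nat) : nat :=
  epsilon (inhabits 0%nat) (fun N => is_N t d h r x N).

Definition R_rate (t d h r x : nat) : R :=
  (ln (INR (N_max t d h r x)) / ln 2 / INR t)%R.

(* Main.v *)
Require Import Defs.
From mathcomp Require Import all_boot all_algebra.
From Stdlib Require Import Reals Lra Lia Psatz ClassicalEpsilon.
From mathcomp Require Import zify.
Import ssrnat.

Set Implicit Arguments.
Unset Strict Implicit.
Unset Printing Implicit Defensive.


Lemma my_sum_ffun_prod (I J : finType) (g : J -> nat) :
  \sum_(f : {ffun I -> J}) \prod_(i : I) g (f i) = (\sum_j g j) ^ #|I|.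
Proof. by rewrite -(bigA_distr_bigA (fun (_ : I) j => g j)) prod_nat_const. Qed.

Lemma my_card_sum (T : finType) (p : pred T) :
  #|[set x | p x]| = \sum_x (p x : nat).
Proof. by rewrite -sum1dep_card big_mkcond /=; apply: eq_bigr => x _; case: (p x). Qed.

Lemma my_sum_mem_card (T : finType) (A : {set T}) :
  \sum_x ((x \in A) : nat) = #|A|.
Proof. by rewrite -sum1_card [RHS]big_mkcond /=; apply: eq_bigr => x _; case: (x \in A). Qed.

Lemma my_prod_bool (I : finType) (b : I -> bool) :
  \prod_i (b i : nat) = ([forall i, b i] : nat).
Proof.
case: (boolP [forall i, b i]) => [/forallP H | /forallPn [i Hi]].
  by rewrite big1 // => i _; rewrite H.
by rewrite (bigD1 i) //= (negbTE Hi) mul0n.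
Qed.

Lemma my_card_prodset (I J : finType) (P : I -> pred J) :
  #|[set v : {ffun I -> J} | [forall i, P i (v i)]]| = \prod_i #|[set j | P i j]|.
Proof.
rewrite my_card_sum.
rewrite (eq_bigr (fun v : {ffun I -> J} => \prod_i (P i (v i) : nat))); last first.
  by move=> v _; rewrite my_prod_bool.
rewrite -(bigA_distr_bigA (fun i j => (P i j : nat))); apply: eq_bigr => i _; by rewrite my_card_sum.
Qed.



Section Mat.
Variables t n m : nat.

Definition Tm (F : {ffun 'I_t -> {ffun 'I_n -> 'I_m}}) : 'M[bool]_(t, n) :=
  \matrix_(i, j) ((F i j : nat) == 0).

Definition PZ (A B : {set 'I_n}) (j : 'I_n) (s : 'I_m) : bool :=
  if j \in B then (s : nat) == 0 else if j \in A then (s : nat) != 0 else true.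

Definition goodZ (A B : {set 'I_n}) (v : {ffun 'I_n -> 'I_m}) := [forall j, PZ A B j (v j)].

Definition rowY (A B : {set 'I_n}) (v : {ffun 'I_n -> 'I_m}) :=
  [forall j, (j \in B) ==> ((v j : nat) == 0)] &&
  [exists j, (j \in A) && ((v j : nat) == 0)].

Lemma Z_eq F (A B : {set 'I_n}) : [disjoint A & B] ->
  Z_T (Tm F) A B = #|[set i | goodZ A B (F i)]|.
Proof.
move=> dAB; apply: eq_card => i; rewrite !inE.
apply/andP/forallP.
- case=> nU /bigcapP Hc j; rewrite /PZ.
  case: ifP => jB; first by have := Hc j jB; rewrite /col_supp inE mxE.
  case: ifP => jA //.
  apply/negP => H; apply/negP: nU; rewrite negbK.
  by apply/bigcupP; exists j => //; rewrite /col_supp inE mxE.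
- move=> H; split.
    apply/negP => /bigcupP [j jA]; rewrite /col_supp inE mxE.
    have := H j; rewrite /PZ jA.
    have -> : (j \in B) = false by apply: (disjointFr dAB).
    by move=> /negbTE ->.
  by apply/bigcapP => j jB; rewrite /col_supp inE mxE; have := H j; rewrite /PZ jB.
Qed.

Lemma Y_eq F (A B : {set 'I_n}) :
  Y_T (Tm F) A B = #|[set i | rowY A B (F i)]|.
Proof.
apply: eq_card => i; rewrite !inE /rowY.
apply/andP/andP; case=> H1 H2; split.
- apply/forallP => j; apply/implyP => jB.
  by move/bigcapP: H1 => /(_ j jB); rewrite /col_supp inE mxE.
- by move/bigcupP: H2 => [j jA]; rewrite /col_supp inE mxE => Hj; apply/existsP; exists j; rewrite jA.
- apply/bigcapP => j jB; rewrite /col_supp inE mxE.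
  by move/forallP: H1 => /(_ j) /implyP; apply.
- by move/existsP: H2 => [j /andP [jA Hj]]; apply/bigcupP; exists j => //; rewrite /col_supp inE mxE.
Qed.

Hypothesis m_gt0 : 0 < m.

Lemma card_s0 : #|[set s : 'I_m | (s : nat) == 0]| = 1.
Proof.
have -> : [set s : 'I_m | (s : nat) == 0] = [set Ordinal m_gt0].
  by apply/setP => s; rewrite !inE -val_eqE.
by rewrite cards1.
Qed.

Lemma card_s1 : #|[set s : 'I_m | (s : nat) != 0]| = m - 1.
Proof.
have := cardsC [set s : 'I_m | (s : nat) == 0]; rewrite card_s0 card_ord.
have -> : ~: [set s : 'I_m | (s : nat) == 0] = [set s : 'I_m | (s : nat) != 0].
  by apply/setP => s; rewrite !inE.
move=> E; lia.
Qed.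

Lemma card_sT : #|[set s : 'I_m | true]| = m.
Proof. by rewrite -[RHS](card_ord m); apply: eq_card => s; rewrite inE. Qed.

Lemma card_goodZ (A B : {set 'I_n}) : [disjoint A & B] ->
  #|[set v : {ffun 'I_n -> 'I_m} | goodZ A B v]| * m ^ (#|A| + #|B|)
  = (m - 1) ^ #|A| * m ^ n.
Proof.
move=> dAB; rewrite /goodZ my_card_prodset.
rewrite -(my_sum_mem_card A) -(my_sum_mem_card B) -big_split /= !expn_sum.
have -> : m ^ n = \prod_(j : 'I_n) m by rewrite prod_nat_const card_ord.
rewrite -!big_split /=; apply: eq_bigr => j _; rewrite /PZ.
case: (boolP (j \in B)) => jB.
  have -> : (j \in A) = false by apply: (disjointFl dAB).
  by rewrite card_s0 /= expn0 expn1 ?mul1n ?muln1.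
case: (boolP (j \in A)) => jA /=.
  by rewrite card_s1 addn0 expn1.
by rewrite card_sT expn0 muln1 mul1n.
Qed.

Definition PY (a : 'I_n) (B : {set 'I_n}) (j : 'I_n) (s : 'I_m) : bool :=
  if j \in a |: B then (s : nat) == 0 else true.

Lemma card_SY a (B : {set 'I_n}) :
  #|[set v : {ffun 'I_n -> 'I_m} | [forall j, PY a B j (v j)]]| * m ^ #|a |: B|
  = m ^ n.
Proof.
rewrite my_card_prodset -(my_sum_mem_card (a |: B)) expn_sum.
have -> : m ^ n = \prod_(j : 'I_n) m by rewrite prod_nat_const card_ord.
rewrite -big_split /=; apply: eq_bigr => j _; rewrite /PY.
case: (j \in a |: B) => /=.
  by rewrite card_s0 expn1 mul1n.
by rewrite card_sT muln1.
Qed.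

Lemma card_rowY (A B : {set 'I_n}) : [disjoint A & B] ->
  #|[set v : {ffun 'I_n -> 'I_m} | rowY A B v]| * m ^ (#|B|.+1) <= #|A| * m ^ n.
Proof.
move=> dAB.
have H1 : #|[set v : {ffun 'I_n -> 'I_m} | rowY A B v]| <=
    \sum_(a in A) #|[set v : {ffun 'I_n -> 'I_m} | [forall j, PY a B j (v j)]]|.
  rewrite (my_card_sum (fun v : {ffun 'I_n -> 'I_m} => rowY A B v)) (eq_bigr (fun a => \sum_(v : {ffun 'I_n -> 'I_m}) ([forall j, PY a B j (v j)] : nat))); last first.
    by move=> a _; rewrite (my_card_sum (fun v : {ffun 'I_n -> 'I_m} => [forall j, PY a B j (v j)])).
  rewrite exchange_big /=; apply: leq_sum => v _.
  case: (boolP (rowY A B v)) => //= /andP [/forallP HB /existsP [a /andP [aA va]]].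
  rewrite (bigD1 a) //=.
  have -> : [forall j, PY a B j (v j)].
    apply/forallP => j; rewrite /PY; case: ifP => // /setU1P [->|jB] //.
    by have := HB j; rewrite jB.
  by [].
apply: (leq_trans (leq_mul H1 (leqnn _))).
rewrite big_distrl /= -sum_nat_const; apply: eq_leq; apply: eq_bigr => a aA.
have -> : #|B|.+1 = #|a |: B|.
  by rewrite cardsU1 (disjointFr dAB aA).
exact: card_SY.
Qed.

End Mat.



Lemma my_leq_pow a b e : a <= b -> a ^ e <= b ^ e.
Proof. by move=> ab; elim: e => [|e IH] //; rewrite !expnS leq_mul. Qed.

Lemma my_ffact_le n d : n ^_ d <= n ^ d.
Proof.
elim: d n => [|d IH] n //; rewrite ffactnS expnS leq_mul //.
exact: leq_trans (IH _) (my_leq_pow _ (leq_pred n)).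
Qed.

Lemma my_bin_le n d : 'C(n, d) <= n ^ d.
Proof.
apply: leq_trans (my_ffact_le n d); rewrite -bin_ffact leq_pmulr //.
exact: fact_gt0.
Qed.

Lemma my_sum_neg (I : finType) (b : I -> bool) :
  \sum_i (b i : nat) + \sum_i (~~ b i : nat) = #|I|.
Proof.
rewrite -big_split /= (eq_bigr (fun _ => 1)); first by rewrite sum1_card.
by move=> i _; case: (b i).
Qed.

Lemma my_exists2_le (T1 T2 : finType) (f : T1 -> T2 -> bool) :
  ([exists a, exists b, f a b] : nat) <= \sum_a \sum_b (f a b : nat).
Proof.
case: (boolP [exists a, exists b, f a b]) => // /existsP [a /existsP [b Hab]].
by rewrite (bigD1 a) //= (bigD1 b) //= Hab.
Qed.

Section Mat3.
Variables t n m : nat.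
Hypothesis m_gt0 : 0 < m.
Notation FT := {ffun 'I_t -> {ffun 'I_n -> 'I_m}}.
Notation VT := {ffun 'I_n -> 'I_m}.

Lemma sumF (g : VT -> nat) :
  \sum_(F : FT) \prod_(i : 'I_t) g (F i) = (\sum_v g v) ^ t.
Proof. by rewrite my_sum_ffun_prod card_ord. Qed.

Lemma sum2neg (p : pred VT) :
  \sum_v 2 ^ (~~ p v : nat) + #|[set v | p v]| = 2 * m ^ n.
Proof.
rewrite my_card_sum -big_split /= (eq_bigr (fun _ => 2)).
  by rewrite sum_nat_const card_ffun !card_ord mulnC.
by move=> v _; case: (p v).
Qed.

Lemma sum2pos (p : pred VT) :
  \sum_v 2 ^ (p v : nat) = m ^ n + #|[set v | p v]|.
Proof.
rewrite my_card_sum (eq_bigr (fun v => 1 + (p v : nat))).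
  by rewrite big_split /= sum1_card card_ffun !card_ord.
by move=> v _; case: (p v).
Qed.

Lemma badZ (A B : {set 'I_n}) z : [disjoint A & B] ->
  #|[set F : FT | Z_T (Tm F) A B < z]| * 2 ^ t
  <= 2 ^ z * (\sum_(v : VT) 2 ^ (~~ goodZ A B v : nat)) ^ t.
Proof.
move=> dAB.
rewrite (my_card_sum (fun F : FT => Z_T (Tm F) A B < z)) big_distrl /= -sumF big_distrr /=.
apply: leq_sum => F _; rewrite Z_eq //.
have HG := my_card_sum (fun i => goodZ A B (F i)).
have HS := my_sum_neg (fun i => goodZ A B (F i)); rewrite card_ord in HS.
rewrite -expn_sum.
case: ltnP => H /=; last by rewrite mul0n.
rewrite mul1n -expnD leq_pexp2l // -{1}HS -HG leq_add2r ltnW //.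
Qed.

Lemma badY (A B : {set 'I_n}) y :
  #|[set F : FT | y < Y_T (Tm F) A B]| * 2 ^ y.+1
  <= (\sum_(v : VT) 2 ^ (rowY A B v : nat)) ^ t.
Proof.
rewrite (my_card_sum (fun F : FT => y < Y_T (Tm F) A B)) big_distrl /= -sumF.
apply: leq_sum => F _; rewrite Y_eq.
rewrite -expn_sum -my_card_sum.
case: ltnP => H /=; last by rewrite mul0n.
by rewrite mul1n leq_pexp2l.
Qed.

End Mat3.



Section Mat4.
Variables t n m : nat.
Hypothesis m_gt0 : 0 < m.
Notation FT := {ffun 'I_t -> {ffun 'I_n -> 'I_m}}.
Notation VT := {ffun 'I_n -> 'I_m}.

Lemma cnt_pairs k l :
  \sum_(A : {set 'I_n}) \sum_(B : {set 'I_n})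
     ([&& [disjoint A & B], #|A| == k & #|B| == l] : nat) <= n ^ (k + l).
Proof.
apply: (@leq_trans (\sum_(A : {set 'I_n}) \sum_(B : {set 'I_n}) ((#|A| == k) * (#|B| == l)))).
  apply: leq_sum => A _; apply: leq_sum => B _.
  by case: [disjoint A & B]; case: (#|A| == k); case: (#|B| == l).
rewrite (eq_bigr (fun A : {set 'I_n} => (#|A| == k) * \sum_(B : {set 'I_n}) (#|B| == l : nat))); last first.
  by move=> A _; rewrite big_distrr.
rewrite -big_distrl /= -(my_card_sum (fun A : {set 'I_n} => #|A| == k)).
rewrite -(my_card_sum (fun A : {set 'I_n} => #|A| == l)) !card_draws card_ord expnD.
by rewrite leq_mul // my_bin_le.
Qed.

Lemma Zpart d r z :
  2 * n ^ (d + r) * 2 ^ z * (2 * m ^ (d + r) - (m - 1) ^ d) ^ t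
     < 2 ^ t * m ^ ((d + r) * t) ->
  2 * (\sum_(A : {set 'I_n}) \sum_(B : {set 'I_n})
     ([&& [disjoint A & B], #|A| == d & #|B| == r] : nat) *
        #|[set F : FT | Z_T (Tm F) A B < z]|) < (m ^ n) ^ t.
Proof.
move=> Hyp.
set M := m ^ n.
have M0 : 0 < M by rewrite expn_gt0 m_gt0.
set K := 2 * m ^ (d + r) - (m - 1) ^ d.
set C := 2 ^ t * m ^ ((d + r) * t).
have C0 : 0 < C by rewrite muln_gt0 !expn_gt0 m_gt0.
have key : forall A B : {set 'I_n},
    ([&& [disjoint A & B], #|A| == d & #|B| == r] : nat) *
      #|[set F : FT | Z_T (Tm F) A B < z]| * C <=
    ([&& [disjoint A & B], #|A| == d & #|B| == r] : nat) * (2 ^ z * (M * K) ^ t).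
  move=> A B; case: (boolP [&& [disjoint A & B], #|A| == d & #|B| == r]);
    last by rewrite !mul0n.
  case/and3P => dAB /eqP cA /eqP cB; rewrite !mul1n.
  have E1 := badZ t m z dAB.
  have E2 := @sum2neg n m (@goodZ n m A B).
  have E3 := card_goodZ m_gt0 dAB; rewrite cA cB in E3.
  set S0 := \sum_(v : VT) 2 ^ (~~ goodZ A B v : nat).
  set G := #|[set v : VT | goodZ A B v]|.
  have E4 : S0 * m ^ (d + r) = M * K.
    have -> : S0 = 2 * M - G by rewrite -E2 addnK.
    rewrite mulnBl E3 /K mulnBr; congr (_ - _).
      by rewrite mulnA [M * 2]mulnC.
    by rewrite mulnC.
  rewrite /C expnM mulnA.
  apply: leq_trans (leq_mul E1 (leqnn _)) _.
  by rewrite -mulnA -expnMn E4.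
have H2 : (\sum_(A : {set 'I_n}) \sum_(B : {set 'I_n})
     ([&& [disjoint A & B], #|A| == d & #|B| == r] : nat) *
        #|[set F : FT | Z_T (Tm F) A B < z]|) * C <=
    n ^ (d + r) * (2 ^ z * (M * K) ^ t).
  rewrite big_distrl /=.
  apply: leq_trans (_ : \sum_(A : {set 'I_n}) \sum_(B : {set 'I_n})
     ([&& [disjoint A & B], #|A| == d & #|B| == r] : nat) * (2 ^ z * (M * K) ^ t) <= _).
    apply: leq_sum => A _; rewrite big_distrl /=; apply: leq_sum => B _; exact: key.
  rewrite (eq_bigr (fun A : {set 'I_n} => (\sum_(B : {set 'I_n})
     ([&& [disjoint A & B], #|A| == d & #|B| == r] : nat)) * (2 ^ z * (M * K) ^ t))); last first.
    by move=> A _; rewrite big_distrl.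
  by rewrite -big_distrl /= leq_mul // cnt_pairs.
rewrite -(ltn_pmul2r C0) -mulnA.
apply: leq_ltn_trans (leq_mul (leqnn 2) H2) _.
have Mt : 0 < M ^ t by rewrite expn_gt0 M0.
move: Hyp; rewrite -(ltn_pmul2r Mt) => Hyp.
rewrite [M ^ t * C]mulnC.
suff -> : 2 * (n ^ (d + r) * (2 ^ z * (M * K) ^ t)) =
  2 * n ^ (d + r) * 2 ^ z * K ^ t * M ^ t by [].
by rewrite expnMn !mulnA mulnAC.
Qed.

Lemma Ypart h r y :
  2 * n ^ (h + r) * (m ^ r.+1 + h) ^ t < 2 ^ y.+1 * m ^ (r.+1 * t) ->
  2 * (\sum_(A : {set 'I_n}) \sum_(B : {set 'I_n})
     ([&& [disjoint A & B], #|A| == h & #|B| == r] : nat) *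
        #|[set F : FT | y < Y_T (Tm F) A B]|) < (m ^ n) ^ t.
Proof.
move=> Hyp.
set M := m ^ n.
have M0 : 0 < M by rewrite expn_gt0 m_gt0.
set K := m ^ r.+1 + h.
set C := 2 ^ y.+1 * m ^ (r.+1 * t).
have C0 : 0 < C by rewrite muln_gt0 !expn_gt0 m_gt0.
have key : forall A B : {set 'I_n},
    ([&& [disjoint A & B], #|A| == h & #|B| == r] : nat) *
      #|[set F : FT | y < Y_T (Tm F) A B]| * C <=
    ([&& [disjoint A & B], #|A| == h & #|B| == r] : nat) * ((M * K) ^ t).
  move=> A B; case: (boolP [&& [disjoint A & B], #|A| == h & #|B| == r]);
    last by rewrite !mul0n.
  case/and3P => dAB /eqP cA /eqP cB; rewrite !mul1n.
  have E1 := badY t m A B y.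
  have E2 := @sum2pos n m (@rowY n m A B).
  have E3 := card_rowY m_gt0 dAB; rewrite cA cB in E3.
  set S1 := \sum_(v : VT) 2 ^ (rowY A B v : nat).
  have E4 : S1 * m ^ r.+1 <= M * K.
    rewrite /S1 E2 mulnDl /K mulnDr leq_add2l [M * h]mulnC; exact: E3.
  rewrite /C expnM mulnA.
  apply: leq_trans (leq_mul E1 (leqnn _)) _.
  by rewrite -expnMn my_leq_pow.
have H2 : (\sum_(A : {set 'I_n}) \sum_(B : {set 'I_n})
     ([&& [disjoint A & B], #|A| == h & #|B| == r] : nat) *
        #|[set F : FT | y < Y_T (Tm F) A B]|) * C <=
    n ^ (h + r) * ((M * K) ^ t).
  rewrite big_distrl /=.
  apply: leq_trans (_ : \sum_(A : {set 'I_n}) \sum_(B : {set 'I_n})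
     ([&& [disjoint A & B], #|A| == h & #|B| == r] : nat) * ((M * K) ^ t) <= _).
    apply: leq_sum => A _; rewrite big_distrl /=; apply: leq_sum => B _; exact: key.
  rewrite (eq_bigr (fun A : {set 'I_n} => (\sum_(B : {set 'I_n})
     ([&& [disjoint A & B], #|A| == h & #|B| == r] : nat)) * ((M * K) ^ t))); last first.
    by move=> A _; rewrite big_distrl.
  by rewrite -big_distrl /= leq_mul // cnt_pairs.
rewrite -(ltn_pmul2r C0) -mulnA.
apply: leq_ltn_trans (leq_mul (leqnn 2) H2) _.
have Mt : 0 < M ^ t by rewrite expn_gt0 M0.
move: Hyp; rewrite -(ltn_pmul2r Mt) => Hyp.
rewrite [M ^ t * C]mulnC.
suff -> : 2 * (n ^ (h + r) * ((M * K) ^ t)) =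
  2 * n ^ (h + r) * K ^ t * M ^ t by [].
by rewrite expnMn !mulnA mulnAC.
Qed.

End Mat4.



Lemma swap3 (T1 T2 T3 : finType) (c : T2 -> T3 -> bool) (P : T1 -> T2 -> T3 -> bool) :
  \sum_(x : T1) \sum_(a : T2) \sum_(b : T3) (c a b && P x a b : nat) =
  \sum_(a : T2) \sum_(b : T3) (c a b : nat) * #|[set x | P x a b]|.
Proof.
rewrite exchange_big /=; apply: eq_bigr => a _.
rewrite exchange_big /=; apply: eq_bigr => b _.
rewrite (my_card_sum (fun x => P x a b)) big_distrr /=; apply: eq_bigr => x _.
by case: (c a b); case: (P x a b).
Qed.

Lemma exists_goodF t n m d h r y z : 0 < m ->
  2 * n ^ (d + r) * 2 ^ z * (2 * m ^ (d + r) - (m - 1) ^ d) ^ t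
     < 2 ^ t * m ^ ((d + r) * t) ->
  2 * n ^ (h + r) * (m ^ r.+1 + h) ^ t < 2 ^ y.+1 * m ^ (r.+1 * t) ->
  exists F : {ffun 'I_t -> {ffun 'I_n -> 'I_m}},
    disjunct (Tm F) d r z /\ inclusive (Tm F) h r y.
Proof.
move=> m_gt0 HZ HY.
have hz := Zpart m_gt0 HZ; have hy := Ypart m_gt0 HY.
pose bad (F : {ffun 'I_t -> {ffun 'I_n -> 'I_m}}) :=
  [exists A : {set 'I_n}, exists B : {set 'I_n}, [&& [disjoint A & B], #|A| == d & #|B| == r] && (Z_T (Tm F) A B < z)]
  || [exists A : {set 'I_n}, exists B : {set 'I_n}, [&& [disjoint A & B], #|A| == h & #|B| == r] && (y < Y_T (Tm F) A B)].
have Hcard : #|[set F | bad F]| < #|{ffun 'I_t -> {ffun 'I_n -> 'I_m}}|.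
  rewrite card_ffun card_ffun !card_ord my_card_sum.
  set XZ := \sum_(A : {set 'I_n}) _ in hz.
  set XY := \sum_(A : {set 'I_n}) _ in hy.
  suff : \sum_F (bad F : nat) <= XZ + XY.
    move: hz hy; set MM := (m ^ n) ^ t; lia.
  rewrite /XZ /XY -!swap3 -big_split /=.
  apply: leq_sum => F _; rewrite /bad.
  case: (boolP [exists A, exists B, _]) => [H1|_]; last first.
    rewrite /=; apply: leq_trans _ (leq_addl _ _).
    exact: (my_exists2_le (fun A B : {set 'I_n} => [&& [disjoint A & B], #|A| == h & #|B| == r] && (y < Y_T (Tm F) A B))).
  apply: leq_trans _ (leq_addr _ _).
  have := my_exists2_le (fun A B : {set 'I_n} => [&& [disjoint A & B], #|A| == d & #|B| == r] && (Z_T (Tm F) A B < z)).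
  by rewrite /= H1.
have [F nb] : exists F, ~~ bad F.
  case: (boolP [exists F, ~~ bad F]) => [/existsP //|/existsPn Hall].
  have : [set F | bad F] = setT by apply/setP => F; rewrite !inE; have := Hall F; rewrite negbK.
  by move=> E; rewrite E cardsT ltnn in Hcard.
exists F; split.
- move=> A B dAB cA cB; rewrite leqNgt; apply/negP => H; move/negP: nb; apply.
  apply/orP; left; apply/existsP; exists A; apply/existsP; exists B.
  by rewrite dAB cA cB !eqxx H.
- move=> A B dAB cA cB; rewrite leqNgt; apply/negP => H; move/negP: nb; apply.
  apply/orP; right; apply/existsP; exists A; apply/existsP; exists B.
  by rewrite dAB cA cB !eqxx H.
Qed.



Lemma ex_sub (T : finType) (S : {set T}) k :
  k <= #|S| -> exists A : {set T}, A \subset S /\ #|A| = k.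
Proof.
elim: k => [|k IH] H; first by exists set0; rewrite sub0set cards0.
have [A [sAS cA]] := IH (ltnW H).
have : 0 < #|S :\: A|.
  by rewrite cardsD (setIidPr sAS) cA; lia.
case/card_gt0P => x; rewrite inE => /andP [xA xS].
exists (x |: A); split.
  by rewrite subUset sub1set xS sAS.
by rewrite cardsU1 xA cA.
Qed.

Lemma pair_sets n d r (j j' : 'I_n) : j != j' -> 0 < d -> 0 < r -> d + r <= n ->
  exists A B : {set 'I_n}, [/\ [disjoint A & B], #|A| = d, #|B| = r, j' \in A & j \in B].
Proof.
move=> jj d0 r0 drn.
set S0 := ~: [set j; j'].
have cS0 : #|S0| = n - 2.
  have := cardsC [set j; j']; rewrite cards2 jj card_ord /S0 /=; lia.
have HB : r.-1 <= #|S0| by rewrite cS0; lia.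
have [B0 [sB0 cB0]] := ex_sub HB.
have HA : d.-1 <= #|S0 :\: B0| by rewrite cardsD (setIidPr sB0) cS0 cB0; lia.
have [A0 [sA0 cA0]] := ex_sub HA.
have jB0 : j \notin B0.
  by apply/negP => /(subsetP sB0); rewrite !inE eqxx.
have j'A0 : j' \notin A0.
  by apply/negP => /(subsetP sA0); rewrite !inE eqxx orbT andbF.
exists (j' |: A0), (j |: B0); split.
- rewrite disjoints_subset; apply/subsetP => x; rewrite !inE => /orP [/eqP ->|xA].
    rewrite negb_or eq_sym jj /=; apply/negP => /(subsetP sB0).
    by rewrite !inE eqxx orbT.
  have := subsetP sA0 x xA; rewrite !inE => /andP [xB /norP [xj _]].
  by rewrite negb_or xj xB.
- by rewrite cardsU1 j'A0 cA0; lia.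
- by rewrite cardsU1 jB0 cB0; lia.
- by rewrite !inE eqxx.
- by rewrite !inE eqxx.
Qed.

Lemma adm_bound t d h r x n : 0 < d -> 0 < r ->
  admissible t d h r x n -> n <= 2 ^ t + d + r.
Proof.
move=> d0 r0 [T [z [y [z0 [_ [Hd _]]]]]].
case: (ltnP n (d + r)) => nle; first by lia.
suff : n <= 2 ^ t by lia.
have inj : injective (fun j : 'I_n => [ffun i : 'I_t => T i j]).
  move=> j j' E; apply/eqP; apply/negP => /negP jj.
  have [A [B [dAB cA cB j'A jB]]] := pair_sets jj d0 r0 nle.
  have := Hd A B dAB cA cB.
  suff -> : Z_T T A B = 0 by rewrite leqn0; move/eqP => z00; rewrite z00 in z0.
  apply/eqP; rewrite cards_eq0; apply/eqP/setP => i; rewrite !inE.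
  apply/negP => /andP [nU /bigcapP Hc].
  move/negP: nU; apply; apply/bigcupP; exists j' => //.
  have := Hc j jB; rewrite /col_supp !inE.
  have := congr1 (fun f : {ffun 'I_t -> bool} => f i) E; rewrite /= !ffunE => ->; done.
have := @leq_card _ _ _ inj; rewrite card_ffun !card_ord card_bool; done.
Qed.

Lemma ex_max (P : nat -> Prop) M k : P k -> (forall n, P n -> n <= M) ->
  exists N, P N /\ forall n, P n -> n <= N.
Proof.
elim: M => [|M IH] Pk HM.
  exists 0; split; last by move=> n /HM.
  by have := HM k Pk; rewrite leqn0 => /eqP <-.
case: (classic (P M.+1)) => HP.
  by exists M.+1; split.
apply: (IH Pk) => n Pn; have := HM n Pn; rewrite leq_eqVlt => /orP [/eqP E|//].
by rewrite E in Pn.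
Qed.

Lemma N_max_ge t d h r x n : 0 < d -> 0 < r -> admissible t d h r x n ->
  n <= N_max t d h r x.
Proof.
move=> d0 r0 An.
have : is_N t d h r x (N_max t d h r x).
  apply: epsilon_spec.
  apply: (@ex_max _ (2 ^ t + d + r) n An).
  by move=> k; apply: adm_bound.
by case=> _ H; apply: H.
Qed.

Section RealPart.
Local Open Scope R_scope.




Lemma INR_add (a b : nat) : INR (a + b)%N = INR a + INR b.
Proof. exact: plus_INR. Qed.

Lemma INR_mul (a b : nat) : INR (a * b)%N = INR a * INR b.
Proof. exact: mult_INR. Qed.

Lemma INR_exp (a b : nat) : INR (a ^ b)%N = INR a ^ b.
Proof.
elim: b => [|b IH]; first by rewrite expn0 /=.
by rewrite expnS INR_mul IH /=.
Qed.

Lemma INR_sub (a b : nat) : (b <= a)%N -> INR (a - b)%N = INR a - INR b.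
Proof. by move=> /leP H; exact: minus_INR. Qed.

Lemma INR_ltn (a b : nat) : INR a < INR b -> (a < b)%N.
Proof. by move=> H; apply/ltP; apply: INR_lt. Qed.

Lemma exp_pow_nat (w : R) (t : nat) : exp w ^ t = exp (w * INR t).
Proof.
elim: t => [|t IH]; first by rewrite /= Rmult_0_r exp_0.
rewrite S_INR /= IH -exp_plus; f_equal; ring.
Qed.

Lemma pow_exp_ln (a : R) (N : nat) : 0 < a -> a ^ N = exp (INR N * ln a).
Proof. by move=> a0; rewrite -ln_pow // exp_ln //; apply: pow_lt. Qed.

Lemma one_minus_pow (w : R) (t : nat) : 0 <= w <= 1 -> (1 - w) ^ t <= exp (- (w * INR t)).
Proof.
move=> Hw.
have : (1 - w) ^ t <= exp (- w) ^ t.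
  apply: pow_incr; split; first lra.
  have := exp_ineq1_le (- w); lra.
by rewrite exp_pow_nat; replace (- w * INR t) with (- (w * INR t)) by ring.
Qed.

Lemma one_plus_pow (v : R) (t : nat) : 0 <= v -> (1 + v) ^ t <= exp (v * INR t).
Proof.
move=> Hv.
have : (1 + v) ^ t <= exp v ^ t.
  apply: pow_incr; split; first lra.
  by have := exp_ineq1_le v; lra.
by rewrite exp_pow_nat.
Qed.

Lemma ln2_bounds : / 2 < ln 2 < 1.
Proof.
split.
- have H : exp (/ 2) < 2.
    have E : exp (/ 2) * exp (/ 2) = exp 1 by rewrite -exp_plus; f_equal; lra.
    have := exp_le_3; have := exp_pos (/ 2); nra.
  rewrite -(ln_exp (/ 2)); apply: ln_increasing => //; exact: exp_pos.
- have H : 2 < exp 1 by have := exp_ineq1 1; lra.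
  rewrite -(ln_exp 1); apply: ln_increasing => //; lra.
Qed.

Lemma bernoulli (a : R) (d : nat) : 0 <= a <= 1 -> 1 - INR d * a <= (1 - a) ^ d.
Proof.
move=> Ha; elim: d => [|d IH]; first by rewrite /=; lra.
rewrite S_INR /=.
have H0 : 0 <= (1 - a) ^ d by apply: pow_le; lra.
have Hd := pos_INR d.
have H1 := Rmult_le_compat_l (1 - a) _ _ ltac:(lra) IH.
nra.
Qed.

Lemma divn_bounds (t q : nat) : (0 < q)%N ->
  INR (t %/ q)%N * INR q <= INR t /\ INR t < (INR (t %/ q)%N + 1) * INR q.
Proof.
move=> q0.
have E := divn_eq t q.
have L := ltn_pmod t q0.
have E' : INR t = INR (t %/ q)%N * INR q + INR (t %% q)%N.
  by rewrite {1}E INR_add INR_mul.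
have L' : INR (t %% q)%N < INR q by apply: lt_INR; apply/ltP.
have P : 0 <= INR (t %% q)%N by apply: pos_INR.
split; nra.
Qed.

Lemma my_pow_mono (a b e : nat) : (a <= b)%N -> (a ^ e <= b ^ e)%N.
Proof. by move=> ab; elim: e => [|e IH] //; rewrite !expnS leq_mul. Qed.




Lemma INR2 : INR 2 = 2. Proof. by rewrite /=; ring. Qed.

Lemma realC1 (u U t E w : R) :
  64 <= u -> 0 < U -> 64 * U <= t ->
  E * U <= t / 64 + t / 4 + U -> 0 <= E ->
  63 / 128 <= w * U -> 0 <= w <= 1 ->
  exp (E * ln 2) * exp (- (w * t)) < 1.
Proof.
move=> u64 U0 Ut EU E0 wU w01.
rewrite -exp_plus -exp_0; apply: exp_increasing.
have [l1 l2] := ln2_bounds.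
have H1 : E * ln 2 <= E by nra.
have H2 : E * U < w * t * U by nra.
have H3 : E < w * t.
  by apply: (Rmult_lt_reg_r U) => //.
lra.
Qed.

Lemma realC2 (U t E v Y : R) :
  0 < U -> 64 * U <= t ->
  E * U <= U + t / 64 -> 0 <= E ->
  v * U <= / 64 -> 0 <= v ->
  t < Y * 8 * U ->
  exp (E * ln 2) * exp (v * t) < exp (Y * ln 2).
Proof.
move=> U0 Ut EU E0 vU v0 YU.
rewrite -exp_plus; apply: exp_increasing.
have [l1 l2] := ln2_bounds.
have H1 : E * ln 2 <= E by nra.
have Y0 : 0 < Y by nra.
have H4 : Y / 2 < Y * ln 2 by nra.
have H2 : v * t * U <= t / 64 by nra.
have H3 : (E + v * t) * U < Y / 2 * U by nra.
have H5 : E + v * t < Y / 2 by apply: (Rmult_lt_reg_r U).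
nra.
Qed.

Lemma C1 (t k d r x y m : nat) :
  (64 * d <= m)%N -> (64 <= m)%N ->
  (k * (64 * (d + r) * m ^ r) <= t)%N ->
  (x * (8 * m ^ r) <= t)%N -> (y * (8 * m ^ r) <= t)%N -> (64 * m ^ r <= t)%N ->
  (2 * (2 ^ k) ^ (d + r) * 2 ^ (x + y) * (2 * m ^ (d + r) - (m - 1) ^ d) ^ t
     < 2 ^ t * m ^ ((d + r) * t))%N.
Proof.
move=> Hdm Hm64 Hk Hx Hy Ht.
have m0 : (0 < m)%N by apply: leq_trans Hm64.
have Hsub : ((m - 1) ^ d <= 2 * m ^ (d + r))%N.
  apply: leq_trans (my_pow_mono _ (leq_subr 1 m)) _.
  apply: leq_trans (leq_pexp2l m0 (leq_addr r d)) _.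
  by rewrite leq_pmull.
apply: INR_ltn.
rewrite !(INR_mul, INR_exp) (INR_sub Hsub) !(INR_mul, INR_exp) (INR_sub m0) INR2 /=.
move/leP/le_INR: Hk; move/leP/le_INR: Hx; move/leP/le_INR: Hy; move/leP/le_INR: Ht.
rewrite !(INR_mul, INR_exp, INR_add).
move/leP/le_INR: Hdm; move/leP/le_INR: Hm64; rewrite INR_mul.
set u := INR m; set tt := INR t.
have -> : INR 64 = 64 by rewrite /=; ring.
have -> : INR 8 = 8 by rewrite /=; ring.
move=> Hu64 Hdu Ht' Hy' Hx' Hk'.
have u0 : 0 < u by lra.
set U := u ^ r.
have U0 : 0 < U by apply: pow_lt.
have Ht2 : 64 * U <= tt := Ht'.
have Hy2 : INR y * (8 * U) <= tt := Hy'.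
have Hx2 : INR x * (8 * U) <= tt := Hx'.
have Hk2 : INR k * (64 * (INR d + INR r) * U) <= tt := Hk'.
have U1 : 1 <= U by apply: pow_R1_Rle; lra.
set a := / u.
have a01 : 0 <= a <= 1.
  split; first by apply: Rlt_le; apply: Rinv_0_lt_compat.
  rewrite /a -Rinv_1; apply: Rinv_le_contravar; lra.
set w := (1 - a) ^ d / (2 * U).
have pa : 0 <= (1 - a) ^ d <= 1.
  split; first by apply: pow_le; lra.
  apply: (Rle_trans _ (1 ^ d)); [apply: pow_incr; lra | rewrite pow1; lra].
have w01 : 0 <= w <= 1.
  rewrite /w; split.
    apply: Rmult_le_pos; first lra.
    by apply: Rlt_le; apply: Rinv_0_lt_compat; lra.
  apply: (Rmult_le_reg_r (2 * U)); first lra.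
  rewrite /Rdiv Rmult_assoc Rinv_l; lra.
have ud0 : u ^ d <> 0 by apply: pow_nonzero; lra.
have Eq : (u - 1) ^ d = 2 * u ^ (d + r) * w.
  have -> : u - 1 = u * (1 - a) by rewrite /a; field; lra.
  rewrite Rpow_mult_distr pow_add /w /U; field; apply: pow_nonzero; lra.
have wU : 63 / 128 <= w * U.
  have -> : w * U = (1 - a) ^ d / 2 by rewrite /w; field; lra.
  have := bernoulli d a01.
  have : INR d * a <= / 64.
    rewrite /a; apply: (Rmult_le_reg_r u) => //.
    rewrite Rmult_assoc Rinv_l; lra.
  lra.
rewrite Eq.
have -> : 2 * u ^ (d + r) - 2 * u ^ (d + r) * w = 2 * u ^ (d + r) * (1 - w) by ring.
rewrite !Rpow_mult_distr pow_mult.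
set P := (u ^ (d + r)) ^ t.
have P0 : 0 < P by apply: pow_lt; apply: pow_lt.
set E := (1 + INR k * (INR d + INR r) + (INR x + INR y)).
have E0 : 0 <= E.
  have := pos_INR k; have := pos_INR d; have := pos_INR r; have := pos_INR x; have := pos_INR y.
  rewrite /E; nra.
have E2 : 2 * (2 ^ k) ^ (d + r) * 2 ^ (x + y) = exp (E * ln 2).
  rewrite -pow_mult.
  have -> : 2 * 2 ^ (k * (d + r)) * 2 ^ (x + y) = 2 ^ (1 + k * (d + r) + (x + y))%N.
    by rewrite !pow_add /=; ring.
  rewrite pow_exp_ln; last lra.
  by rewrite !INR_add INR_mul /E INR_add /=.
have Hw := one_minus_pow t w01.
have key : exp (E * ln 2) * exp (- (w * tt)) < 1.
  apply: (@realC1 u U tt E w); try lra.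
  have -> : E * U = U + INR k * (INR d + INR r) * U + INR x * U + INR y * U by rewrite /E; ring.
  lra.
have ex0 : 0 < exp (E * ln 2) by apply: exp_pos.
have Hpt : 0 < 2 ^ t by apply: pow_lt; lra.
rewrite E2.
have H1 : exp (E * ln 2) * (1 - w) ^ t <= exp (E * ln 2) * exp (- (w * tt)).
  by apply: Rmult_le_compat_l; [lra | exact: Hw].
have H2 : exp (E * ln 2) * (1 - w) ^ t < 1 by lra.
have : exp (E * ln 2) * (1 - w) ^ t * (2 ^ t * P) < 1 * (2 ^ t * P).
  apply: Rmult_lt_compat_r => //; nra.
lra.
Qed.

Lemma C2 (t k h r y m : nat) :
  (64 * h <= m)%N -> (64 <= m)%N ->
  (k * (64 * (h + r) * m ^ r) <= t)%N ->
  (t < y.+1 * (8 * m ^ r))%N -> (64 * m ^ r <= t)%N ->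
  (2 * (2 ^ k) ^ (h + r) * (m ^ r.+1 + h) ^ t < 2 ^ y.+1 * m ^ (r.+1 * t))%N.
Proof.
move=> Hhm Hm64 Hk Hy Ht.
apply: INR_ltn.
rewrite !(INR_mul, INR_exp, INR_add).
move/leP/le_INR: Hk; move/ltP/lt_INR: Hy; move/leP/le_INR: Ht.
rewrite !(INR_mul, INR_exp, INR_add).
move/leP/le_INR: Hhm; move/leP/le_INR: Hm64; rewrite INR_mul.
set u := INR m; set tt := INR t.
have -> : INR 64 = 64 by rewrite /=; ring.
have -> : INR 8 = 8 by rewrite /=; ring.
rewrite INR2.
move=> Hu64 Hhu Ht' Hy' Hk'.
have u0 : 0 < u by lra.
set U := u ^ r.
have U0 : 0 < U by apply: pow_lt.
have Ht2 : 64 * U <= tt := Ht'.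
have Hy2 : tt < INR y.+1 * (8 * U) := Hy'.
have Hk2 : INR k * (64 * (INR h + INR r) * U) <= tt := Hk'.
have ur0 : 0 < u ^ r.+1 by apply: pow_lt.
set v := INR h / u ^ r.+1.
have v0 : 0 <= v.
  rewrite /v; apply: Rmult_le_pos; first exact: pos_INR.
  by apply: Rlt_le; apply: Rinv_0_lt_compat.
have vU : v * U <= / 64.
  have -> : v * U = INR h / u.
    rewrite /v /U /=; field; split; [lra | apply: pow_nonzero; lra].
  apply: (Rmult_le_reg_r u) => //.
  rewrite /Rdiv Rmult_assoc Rinv_l; lra.
have -> : u ^ r.+1 + INR h = u ^ r.+1 * (1 + v) by rewrite /v; field; lra.
rewrite Rpow_mult_distr pow_mult.
set Q := (u ^ r.+1) ^ t.
have Q0 : 0 < Q by apply: pow_lt.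
set E := 1 + INR k * (INR h + INR r).
have E0 : 0 <= E.
  have := pos_INR k; have := pos_INR h; have := pos_INR r.
  rewrite /E; nra.
have E2 : 2 * (2 ^ k) ^ (h + r) = exp (E * ln 2).
  rewrite -pow_mult.
  have -> : 2 * 2 ^ (k * (h + r)) = 2 ^ (1 + k * (h + r))%N by rewrite !pow_add /=; ring.
  rewrite pow_exp_ln; last lra.
  by rewrite !INR_add INR_mul /E INR_add /=.
have E3 : 2 ^ y.+1 = exp (INR y.+1 * ln 2) by rewrite pow_exp_ln //; lra.
rewrite E2 E3.
have Hv := one_plus_pow t v0.
have key : exp (E * ln 2) * exp (v * tt) < exp (INR y.+1 * ln 2).
  apply: (@realC2 U tt E v (INR y.+1)); try lra.
  have -> : E * U = U + INR k * (INR h + INR r) * U by rewrite /E; ring.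
  lra.
have ex0 : 0 < exp (E * ln 2) by apply: exp_pos.
have H1 : exp (E * ln 2) * (1 + v) ^ t <= exp (E * ln 2) * exp (v * tt).
  by apply: Rmult_le_compat_l; [lra | exact: Hv].
have H2 : exp (E * ln 2) * (1 + v) ^ t < exp (INR y.+1 * ln 2) by lra.
have : exp (E * ln 2) * (1 + v) ^ t * Q < exp (INR y.+1 * ln 2) * Q.
  by apply: Rmult_lt_compat_r.
lra.
Qed.

End RealPart.



Lemma ln_mono (a b : R) : (0 < a)%R -> (a <= b)%R -> (ln a <= ln b)%R.
Proof.
move=> a0 ab; case: (Rle_lt_or_eq_dec _ _ ab) => [H|->]; last by apply: Rle_refl.
by apply: Rlt_le; apply: ln_increasing.
Qed.

Theorem theorem3p1 :
  forall r : nat, (0 < r)%nat ->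
  exists c0 c : R, (0 < c0)%R /\ (0 < c)%R /\
    forall d h : nat, (0 < d)%nat ->
      let D := INR (maxn d h) in
      (* o(1) term: for every eps > 0, eventually in t, uniformly in x *)
      forall eps : R, (0 < eps)%R ->
      exists T0 : nat,
        forall t x : nat, (T0 <= t)%nat -> (0 < t)%nat -> (0 < x)%nat ->
          (INR x <= c0 / D ^ r * INR t)%R ->
          ((c - eps) / D ^ (r + 1) <= R_rate t d h r x)%R.
Proof.
move=> r r0.
have p64 : (0 < 64 ^ r)%R by apply: pow_lt; lra.
have pr1 : (0 < INR r.+1)%R by apply: lt_0_INR; lia.
exists (/ (8 * 64 ^ r))%R, (/ (64 * INR r.+1 * 64 ^ r))%R.
split; first by apply: Rinv_0_lt_compat; lra.
split; first by apply: Rinv_0_lt_compat; nra.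
move=> d h d0 D eps eps0.
set Dn := maxn d h.
have Dn0 : (0 < Dn)%N by rewrite /Dn; apply: leq_trans d0 (leq_maxl d h).
have D1 : (1 <= D)%R by rewrite /D -/Dn; apply: (le_INR 1); apply/leP.
have D0 : (0 < D)%R by lra.
set m := (64 * Dn)%N.
have m64 : (64 <= m)%N by rewrite /m leq_pmulr.
have m0 : (0 < m)%N by apply: leq_trans m64.
have [N1 HN1] := INR_archimed eps (D ^ (r + 1)) eps0.
exists (maxn (64 * m ^ r) N1).
move=> t x HT0 t0 x0 Hx.
rewrite geq_max in HT0; case/andP: HT0 => Ht64 HtN1.
set Qn := (64 * r.+1 * Dn * m ^ r)%N.
have Qn0 : (0 < Qn)%N by rewrite /Qn !muln_gt0 Dn0 expn_gt0 m0.
set k := (t %/ Qn)%N.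
set y := (t %/ (8 * m ^ r))%N.
have mr0 : (0 < 8 * m ^ r)%N by rewrite muln_gt0 expn_gt0 m0.
have Hk : (k * Qn <= t)%N by apply: leq_divM.
have Hy : (y * (8 * m ^ r) <= t)%N by apply: leq_divM.
have Hy1 : (t < y.+1 * (8 * m ^ r))%N by apply: ltn_ceil.
have INRm : INR (m ^ r) = (64 ^ r * D ^ r)%R.
  by rewrite INR_exp /m INR_mul -Rpow_mult_distr /D -/Dn /=; f_equal; ring.
have Hxn : (x * (8 * m ^ r) <= t)%N.
  apply/leP; apply: INR_le; rewrite !INR_mul INRm.
  have -> : INR 8 = 8%R by rewrite /=; ring.
  have Dr0 : (0 < D ^ r)%R by apply: pow_lt.
  have E : (/ (8 * 64 ^ r) / D ^ r * INR t * (8 * (64 ^ r * D ^ r)) = INR t)%R.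
    by field; split; lra.
  rewrite -{1}E; apply: Rmult_le_compat_r => //; nra.
have dD : (d <= Dn)%N by apply: leq_maxl.
have hD : (h <= Dn)%N by apply: leq_maxr.
have kd : (k * (64 * (d + r) * m ^ r) <= t)%N.
  apply: leq_trans Hk; rewrite /Qn leq_mul2l; apply/orP; right.
  rewrite -!mulnA leq_mul2l; apply/orP; right.
  rewrite !mulnA leq_mul2r; apply/orP; right; nia.
have kh : (k * (64 * (h + r) * m ^ r) <= t)%N.
  apply: leq_trans Hk; rewrite /Qn leq_mul2l; apply/orP; right.
  rewrite -!mulnA leq_mul2l; apply/orP; right.
  rewrite !mulnA leq_mul2r; apply/orP; right; nia.
have HC1 := C1 (m := m) (r := r) (x := x) (y := y) (k := k) (t := t) (d := d)
  ltac:(rewrite /m leq_mul2l dD orbT //) m64 kd Hxn Hy Ht64.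
have HC2 := C2 (m := m) (r := r) (y := y) (k := k) (t := t) (h := h)
  ltac:(rewrite /m leq_mul2l hD orbT //) m64 kh Hy1 Ht64.
have [F [Hdis Hinc]] := exists_goodF m0 HC1 HC2.
have Adm : admissible t d h r x (2 ^ k)%N.
  exists (Tm F), (x + y)%N, y; split; first by rewrite addn_gt0 x0.
  by split; first by [].
have HN := N_max_ge d0 r0 Adm.
rewrite /R_rate.
set N := N_max t d h r x.
have [l1 l2] := ln2_bounds.
have tR : (0 < INR t)%R by apply: lt_0_INR; apply/ltP.
have lnN : (INR k * ln 2 <= ln (INR N))%R.
  rewrite -ln_pow; last lra.
  apply: ln_mono; first by apply: pow_lt; lra.
  have := le_INR _ _ (elimT leP HN); rewrite INR_exp.
  by have -> : INR 2 = 2%R by rewrite /=; ring.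
have kt : (INR k / INR t <= ln (INR N) / ln 2 / INR t)%R.
  apply: Rmult_le_compat_r; first by apply: Rlt_le; apply: Rinv_0_lt_compat.
  apply: (Rmult_le_reg_r (ln 2)); first lra.
  rewrite /Rdiv Rmult_assoc Rinv_l; lra.
apply: Rle_trans kt.
have [_ kb] := divn_bounds t Qn0.
have INRQ : INR Qn = (64 * INR r.+1 * 64 ^ r * D ^ (r + 1))%R.
  rewrite /Qn !INR_mul INRm /D -/Dn.
  have -> : INR 64 = 64%R by rewrite /=; ring.
  rewrite pow_add /=; ring.
have DR0 : (0 < D ^ (r + 1))%R by apply: pow_lt.
have tN1 : (INR N1 <= INR t)%R by apply: le_INR; apply/leP.
have Heps : (D ^ (r + 1) <= eps * INR t)%R by nra.
rewrite INRQ in kb.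
set Dr := (D ^ (r + 1))%R in DR0 Heps kb *.
set q := (64 * INR r.+1 * 64 ^ r)%R in kb *.
have q0 : (0 < q)%R by rewrite /q; nra.
have ->: ((/ q - eps) / Dr = / (q * Dr) - eps / Dr)%R by field; lra.
have k0 := pos_INR k.
have A1 : (/ (q * Dr) - / INR t <= INR k / INR t)%R.
  apply: (Rmult_le_reg_r (INR t * (q * Dr))); first by apply: Rmult_lt_0_compat => //; apply: Rmult_lt_0_compat.
  have -> : ((/ (q * Dr) - / INR t) * (INR t * (q * Dr)) = INR t - q * Dr)%R by field; lra.
  have -> : (INR k / INR t * (INR t * (q * Dr)) = INR k * (q * Dr))%R by field; lra.
  have kb' : (INR t < (INR k + 1) * (q * Dr))%R := kb.
  lra.
have A2 : (eps / Dr >= / INR t)%R.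
  apply: Rle_ge; apply: (Rmult_le_reg_r (INR t * Dr)); first by apply: Rmult_lt_0_compat.
  have -> : (/ INR t * (INR t * Dr) = Dr)%R by field; lra.
  have -> : (eps / Dr * (INR t * Dr) = eps * INR t)%R by field; lra.
  lra.
lra.
Qed.
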